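(* Fix $d\ge1$, $N\ge1$, $\alpha\ge2$, powers $P_s,P_r>0$, gains $\xi_{u,v}>0$, and positions $\mathbf{s},\mathbf{1},\dots,\mathbf{N}\in\mathbb{R}^d$ with $\mathbf{s}\neq\mathbf{j}$ for all $j$. For a relay position $\mathbf{r}\in\mathbb{R}^d$ let $\mathsf{SNR}_{u,v}=\xi_{u,v}P_u/\|\mathbf{u}-\mathbf{v}\|^{\alpha}$ for $(u,v)\in\{(s,r),(s,j),(r,j)\}$ (an SNR being $+\infty$ when the distance is $0$). With $\mathsf{C}(x)=\tfrac12\log(1+x)$, $f_j(\rho,\mathbf{r})=\mathsf{SNR}_{s,j}+\mathsf{SNR}_{r,j}+2\rho\sqrt{\mathsf{SNR}_{s,j}\mathsf{SNR}_{r,j}}$, $g^*_j(\rho,\mathbf{r})=(1-\rho^2)\mathsf{SNR}_{s,r}$, $$R_{DF}(\rho,\mathbf{r})=\min_{1\le j\le N}\min\big(\mathsf{C}(f_j(\rho,\mathbf{r})),\mathsf{C}(g^*_j(\rho,\mathbf{r}))\big),\qquad R_{DF}(\mathbf{r})=\max_{\rho\in[0,1]}R_{DF}(\rho,\mathbf{r}),$$ the map $(t,\mathbf{r})\mapsto R_{DF}(\sqrt t,\mathbf{r})$ is quasi-concave on $[0,1]\times\mathbb{R}^d$ (i.e., $R_{DF}(\rho,\mathbf{r})$ is quasi-concave in $(\rho^2,\mathbf{r})$), and $R_{DF}(\mathbf{r})$ is quasi-concave in $\mathbf{r}\in\mathbb{R}^d$.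
   Context: Setting: real AWGN multicast relay channel (decode-forward rate) with source $s$, relay at position $\mathbf{r}$, destinations $1,\dots,N$, path-loss exponent $\alpha$ and channel gains $a_{u,v}=\sqrt{\xi_{u,v}}/\|\mathbf{u}-\mathbf{v}\|^{\alpha/2}$; $\rho$ is the source–relay input correlation coefficient. A function $F$ (possibly taking value $+\infty$) on a convex set is quasi-concave if $F(\lambda x_1+(1-\lambda)x_2)\ge\min(F(x_1),F(x_2))$ for all $x_1,x_2$ and $\lambda\in[0,1]$. *)

(* Defs.v *)
From HB Require Import structures.
From mathcomp Require Import all_boot all_order all_algebra.
From mathcomp Require Import all_classical all_reals all_analysis.
Set Implicit Arguments. Unset Strict Implicit. Unset Printing Implicit Defensive.
Import Order.TTheory GRing.Theory Num.Theory.
Local Open Scope ring_scope.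
Local Open Scope classical_set_scope.

Section DF.
Variable R : realType.

Definition edist (d : nat) (u v : 'rV[R]_d) : R :=
  Num.sqrt (\sum_(i < d) (u ord0 i - v ord0 i) ^+ 2).

Definition SNR (d : nat) (alpha xi P : R) (u v : 'rV[R]_d) : \bar R :=
  if edist u v == 0 then +oo%E else (xi * P / (edist u v `^ alpha))%:E.

Definition esqrt (x : \bar R) : \bar R :=
  match x with
  | r%:E => (Num.sqrt r)%:E
  | +oo%E => +oo%E
  | -oo%E => 0%E
  end.

Definition Ccap (x : \bar R) : \bar R :=
  match x with
  | r%:E => (ln (1 + r) / 2)%:E
  | +oo%E => +oo%E
  | -oo%E => -oo%E
  end.

Definition quasi_concave_on (V : lmodType R) (D : set V) (F : V -> \bar R) :=
  forall x1 x2 : V, D x1 -> D x2 -> forall l : R, 0 <= l <= 1 ->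
    (Order.min (F x1) (F x2) <= F (l *: x1 + (1 - l) *: x2)%R)%E.

Definition RDF_rho (d N : nat) (alpha Ps Pr xi_sr : R) (xi_sj xi_rj : 'I_N -> R)
  (s : 'rV[R]_d) (dst : 'I_N -> 'rV[R]_d) (rho : R) (r : 'rV[R]_d) : \bar R :=
  \big[Order.min/+oo%E]_(j < N)
    Order.min
      (Ccap (SNR alpha (xi_sj j) Ps s (dst j) + SNR alpha (xi_rj j) Pr r (dst j)
             + (2 * rho)%:E * esqrt (SNR alpha (xi_sj j) Ps s (dst j)
                                     * SNR alpha (xi_rj j) Pr r (dst j))))%E
      (Ccap ((1 - rho ^+ 2)%:E * SNR alpha xi_sr Ps s r))%E.

Definition RDF (d N : nat) (alpha Ps Pr xi_sr : R) (xi_sj xi_rj : 'I_N -> R)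
  (s : 'rV[R]_d) (dst : 'I_N -> 'rV[R]_d) (r : 'rV[R]_d) : \bar R :=
  ereal_sup [set RDF_rho alpha Ps Pr xi_sr xi_sj xi_rj s dst rho r
            | rho in `[0, 1]%classic].

End DF.

(* Main.v *)
Require Import Defs.
From HB Require Import structures.
From mathcomp Require Import all_boot all_order all_algebra.
From mathcomp Require Import all_classical all_reals all_analysis.
From mathcomp Require Import ring lra.
Import Order.TTheory GRing.Theory Num.Theory.
Local Open Scope ring_scope.
Local Open Scope classical_set_scope.

Section Aux.
Variable R : realType.


Lemma sum_sq_ge0 (d : nat) (a : 'I_d -> R) : 0 <= \sum_i a i ^+ 2.
Proof. by apply: sumr_ge0 => i _; rewrite sqr_ge0. Qed.

Lemma sum_sq_eq0 (d : nat) (a : 'I_d -> R) :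
  \sum_i a i ^+ 2 = 0 -> forall i, a i = 0.
Proof.
move=> H i; have := @psumr_eq0P _ _ xpredT _ (fun i _ => sqr_ge0 (a i)) H i isT.
by move/eqP; rewrite sqrf_eq0 => /eqP.
Qed.

Lemma cauchy_schwarz (d : nat) (a b : 'I_d -> R) :
  \sum_i a i * b i <=
  Num.sqrt (\sum_i a i ^+ 2) * Num.sqrt (\sum_i b i ^+ 2).
Proof.
set A := \sum_i a i ^+ 2; set B := \sum_i b i ^+ 2.
set s := Num.sqrt A; set t := Num.sqrt B.
have A0 : 0 <= A by exact: sum_sq_ge0.
have B0 : 0 <= B by exact: sum_sq_ge0.
have sA : s ^+ 2 = A by rewrite sqr_sqrtr.
have tB : t ^+ 2 = B by rewrite sqr_sqrtr.
have s0 : 0 <= s by rewrite sqrtr_ge0.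
have t0 : 0 <= t by rewrite sqrtr_ge0.
have [s_eq0|s_gt0] := eqVneq s 0.
  have : A = 0 by rewrite -sA s_eq0 expr0n.
  move/sum_sq_eq0 => az.
  rewrite s_eq0 mul0r big1 // => i _; by rewrite az mul0r.
have [t_eq0|t_gt0] := eqVneq t 0.
  have : B = 0 by rewrite -tB t_eq0 expr0n.
  move/sum_sq_eq0 => bz.
  rewrite t_eq0 mulr0 big1 // => i _; by rewrite bz mulr0.
have key : 2 * (\sum_i a i * b i) * (s * t) <= A * t ^+ 2 + B * s ^+ 2.
  rewrite /A /B !mulr_suml -big_split /= mulr_sumr mulr_suml.
  apply: ler_sum => i _.
  have := sqr_ge0 (a i * t - b i * s); nra.
have st0 : 0 < s * t by rewrite mulr_gt0 // lt_neqAle eq_sym ?s_gt0 ?t_gt0.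
rewrite -sA -tB in key.
nra.
Qed.

Lemma norm_conv (d : nat) (a b : 'I_d -> R) (l : R) : 0 <= l <= 1 ->
  Num.sqrt (\sum_i (l * a i + (1 - l) * b i) ^+ 2) <=
  l * Num.sqrt (\sum_i a i ^+ 2) + (1 - l) * Num.sqrt (\sum_i b i ^+ 2).
Proof.
move=> /andP[l0 l1].
have -> : \sum_i (l * a i + (1 - l) * b i) ^+ 2 =
  l ^+ 2 * \sum_i a i ^+ 2 + (2 * l * (1 - l)) * \sum_i a i * b i
  + (1 - l) ^+ 2 * \sum_i b i ^+ 2.
  rewrite !mulr_sumr -!big_split /=; apply: eq_bigr => i _; ring.
have cs := cauchy_schwarz _ a b.
set A := \sum_i a i ^+ 2 in cs *; set B := \sum_i b i ^+ 2 in cs *.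
set C := \sum_i a i * b i in cs *.
have A0 : 0 <= A by exact: sum_sq_ge0.
have B0 : 0 <= B by exact: sum_sq_ge0.
have sA : Num.sqrt A ^+ 2 = A by rewrite sqr_sqrtr.
have tB : Num.sqrt B ^+ 2 = B by rewrite sqr_sqrtr.
have s0 : 0 <= Num.sqrt A by rewrite sqrtr_ge0.
have t0 : 0 <= Num.sqrt B by rewrite sqrtr_ge0.
have R0 : 0 <= l * Num.sqrt A + (1 - l) * Num.sqrt B.
  by rewrite addr_ge0 // mulr_ge0 // subr_ge0.
rewrite -(ger0_norm R0) -sqrtr_sqr ler_sqrt; last by rewrite sqr_ge0.
have h : 0 <= l * (1 - l) by rewrite mulr_ge0 // subr_ge0.
move: cs R0 sA tB s0 t0; set s := Num.sqrt A; set t := Num.sqrt B.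
move=> cs R0 sA tB s0 t0; rewrite -sA -tB.
have h2 : l * (1 - l) * C <= l * (1 - l) * (s * t) by rewrite ler_wpM2l.
nra.
Qed.


Lemma powR_conv (a x y l : R) : 1 <= a -> 0 <= x -> 0 <= y -> 0 <= l <= 1 ->
  (l * x + (1 - l) * y) `^ a <= l * x `^ a + (1 - l) * y `^ a.
Proof.
move=> a1 x0 y0 /andP[l0 l1].
have := @convex_powR R a a1 (Itv01 l0 l1) x y.
rewrite !inE /= !in_itv /= !andbT => /(_ x0 y0).
by rewrite !convRE.
Qed.

Lemma lemG (a D D1 D2 w1 w2 w l : R) : 1 <= a -> 0 <= l <= 1 ->
  0 <= D -> 0 <= D1 -> 0 <= D2 ->
  D <= l * D1 + (1 - l) * D2 ->
  D1 `^ a <= w1 -> D2 `^ a <= w2 -> l * w1 + (1 - l) * w2 <= w ->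
  D `^ a <= w.
Proof.
move=> a1 /andP[l0 l1] D0 D10 D20 DD h1 h2 hw.
have a0 : 0 <= a by apply: le_trans a1.
have hD : D \in Num.nneg by rewrite nnegrE.
have hC : l * D1 + (1 - l) * D2 \in Num.nneg.
  by rewrite nnegrE addr_ge0 // mulr_ge0 // subr_ge0.
have P1 := ge0_ler_powR a0 hD hC DD. apply: (le_trans P1).
have P2 := @powR_conv a D1 D2 l a1 D10 D20 (ltac:(by rewrite l0 l1) : 0 <= l <= 1). apply: (le_trans P2).
apply: le_trans hw; apply: lerD; apply: ler_wpM2l => //; by rewrite subr_ge0.
Qed.

Lemma sqrt_conc (x y l : R) : 0 <= x -> 0 <= y -> 0 <= l <= 1 ->
  l * Num.sqrt x + (1 - l) * Num.sqrt y <= Num.sqrt (l * x + (1 - l) * y).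
Proof.
move=> x0 y0 /andP[l0 l1].
have X0 : 0 <= Num.sqrt x by rewrite sqrtr_ge0.
have Y0 : 0 <= Num.sqrt y by rewrite sqrtr_ge0.
have L0 : 0 <= l * Num.sqrt x + (1 - l) * Num.sqrt y.
  by rewrite addr_ge0 // mulr_ge0 // subr_ge0.
rewrite -(ger0_norm L0) -sqrtr_sqr ler_sqrt; last first.
  by rewrite addr_ge0 // mulr_ge0 // subr_ge0.
rewrite -{2}(sqr_sqrtr x0) -{2}(sqr_sqrtr y0).
move: X0 Y0; set X := Num.sqrt x; set Y := Num.sqrt y => X0 Y0.
have h : 0 <= l * (1 - l) by rewrite mulr_ge0 // subr_ge0.
have := sqr_ge0 (X - Y); nra.
Qed.

Lemma edist_conv_r (d : nat) (z x y : 'rV[R]_d) (l : R) : 0 <= l <= 1 ->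
  Defs.edist z (l *: x + (1 - l) *: y) <= l * Defs.edist z x + (1 - l) * Defs.edist z y.
Proof.
move=> hl; rewrite /Defs.edist.
rewrite (eq_bigr (fun i => (l * (z ord0 i - x ord0 i) + (1 - l) * (z ord0 i - y ord0 i)) ^+ 2)).
  exact: norm_conv.
by move=> i _; rewrite !mxE; congr (_ ^+ 2); ring.
Qed.

Lemma edist_conv_l (d : nat) (z x y : 'rV[R]_d) (l : R) : 0 <= l <= 1 ->
  Defs.edist (l *: x + (1 - l) *: y) z <= l * Defs.edist x z + (1 - l) * Defs.edist y z.
Proof.
move=> hl; rewrite /Defs.edist.
rewrite (eq_bigr (fun i => (l * (x ord0 i - z ord0 i) + (1 - l) * (y ord0 i - z ord0 i)) ^+ 2)).
  exact: norm_conv.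
by move=> i _; rewrite !mxE; congr (_ ^+ 2); ring.
Qed.

Lemma Dedist_ge0 (d : nat) (x y : 'rV[R]_d) : 0 <= Defs.edist x y.
Proof. by rewrite /Defs.edist sqrtr_ge0. Qed.



Lemma qc_levels (x1 x2 y : \bar R) : (0 <= y)%E ->
  (forall c : R, 0 < c -> (c%:E <= x1)%E -> (c%:E <= x2)%E -> (c%:E <= y)%E) ->
  (Order.min x1 x2 <= y)%E.
Proof.
move=> y0 H.
have h1 : (Order.min x1 x2 <= x1)%E by rewrite ge_min lexx.
have h2 : (Order.min x1 x2 <= x2)%E by rewrite ge_min lexx orbT.
move: h1 h2; case E: (Order.min x1 x2) => [r| |] h1 h2.
- have [r0|r0] := lerP r 0; last exact: H.
  by apply: le_trans y0; rewrite lee_fin.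
- have Hc : forall c : R, 0 < c -> (c%:E <= y)%E.
    move=> c c0; apply: H => //; exact: le_trans (leey _) _.
  clear H; move: y0 Hc; case: y => [s| |] // _ Hc.
  have := Hc (`|s| + 1) ltac:(by rewrite ltr_wpDl).
  rewrite lee_fin => h; exfalso.
  have := ler_norm s; lra.
- exact: leNye.
Qed.

Lemma Ccap_le (x y : \bar R) : (0 <= x)%E -> (x <= y)%E -> (Ccap x <= Ccap y)%E.
Proof.
case: x => [r| |] //; case: y => [s| |] //= r0 rs; last exact: leey.
rewrite lee_fin in r0 rs; rewrite lee_fin ler_pM2r ?invr_gt0 //.
move: rs; rewrite lee_fin => rs; rewrite ler_ln ?posrE; lra.
Qed.

Lemma Ccap_min (x1 x2 : \bar R) : (0 <= x1)%E -> (0 <= x2)%E ->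
  Ccap (Order.min x1 x2) = Order.min (Ccap x1) (Ccap x2).
Proof.
move=> h1 h2; have [le12|le21] := leP x1 x2.
  by apply/esym/min_idPl; exact: Ccap_le.
apply/esym/min_idPr; apply: Ccap_le => //; exact: ltW.
Qed.

Lemma SNR_ge0 (d : nat) (al xi P : R) (u v : 'rV[R]_d) : 0 <= xi * P ->
  (0 <= SNR al xi P u v)%E.
Proof.
move=> K0; rewrite /SNR; case: ifP => // _.
by rewrite lee_fin divr_ge0 // powR_ge0.
Qed.


Lemma SNR_inf (d : nat) (al xi P : R) (u v : 'rV[R]_d) :
  Defs.edist u v = 0 -> SNR al xi P u v = +oo%E.
Proof. by move=> H; rewrite /SNR H eqxx. Qed.

Lemma SNR_fin (d : nat) (al xi P : R) (u v : 'rV[R]_d) :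
  Defs.edist u v != 0 -> SNR al xi P u v = (xi * P / Defs.edist u v `^ al)%:E.
Proof. by move=> H; rewrite /SNR (negbTE H). Qed.

Lemma g_level (d : nat) (al xi P c t : R) (u v : 'rV[R]_d) :
  0 < al -> 0 < xi * P -> 0 < c -> 0 <= t <= 1 ->
  (c%:E <= (1 - t)%:E * SNR al xi P u v)%E <->
  (t < 1 /\ Defs.edist u v `^ al <= (1 - t) * (xi * P) / c).
Proof.
move=> al0 K0 c0 /andP[t0 t1].
have D0 := @Dedist_ge0 d u v.
have [tl1|tge1] := ltP t 1; last first.
  have -> : t = 1 by apply/eqP; rewrite eq_le t1 tge1.
  rewrite subrr mul0e lee_fin; split; [lra | by case].
have t1p : 0 < 1 - t by rewrite subr_gt0.
have [Dz|Dnz] := eqVneq (Defs.edist u v) 0.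
  rewrite SNR_inf // mulry gtr0_sg // mul1e Dz powR0 ?gt_eqF //.
  split => _; last exact: leey.
  by split => //; apply: divr_ge0; [apply: mulr_ge0|]; apply: ltW.
rewrite SNR_fin // -EFinM lee_fin.
have Dp : 0 < Defs.edist u v by rewrite lt_neqAle eq_sym Dnz D0.
have Dap : 0 < Defs.edist u v `^ al by rewrite powR_gt0.
rewrite mulrA ler_pdivlMr // ler_pdivlMr //; split; first by move=> h; split => //; lra.
by case=> _ h; lra.
Qed.

Lemma core_f (A c p q u : R) : 0 <= p -> 0 <= q -> 0 < u -> A < c ->
  q ^+ 2 = p ^+ 2 + (c - A) ->
  (c <= A + u ^+ 2 + 2 * p * u) = (c - A <= u * (q + p)).
Proof.
move=> p0 q0 u0 Ac hq.
have qp : 0 < q + p.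
  have : 0 < q ^+ 2 by rewrite hq; nra.
  nra.
apply/idP/idP => h.
- have h1 : q <= u + p.
    have : q ^+ 2 <= (u + p) ^+ 2 by nra.
    nra.
  nra.
- have h1 : q - p <= u.
    have : (q - p) * (q + p) <= u * (q + p) by nra.
    by rewrite ler_pM2r.
  nra.
Qed.

Lemma ge0_neqNy (x : \bar R) : (0 <= x)%E -> x != -oo%E.
Proof. by move=> h; rewrite -ltNye; apply: lt_le_trans h; exact: ltNyr. Qed.

Lemma f_level (d : nat) (al xi P A c t : R) (u v : 'rV[R]_d) :
  2 <= al -> 0 < xi * P -> 0 < A -> A < c -> 0 <= t ->
  (c%:E <= A%:E + SNR al xi P u v
           + (2 * Num.sqrt t)%:E * esqrt (A%:E * SNR al xi P u v))%E <->
  (Defs.edist u v `^ (al / 2) <=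
     Num.sqrt (xi * P) * (Num.sqrt (t * A + c - A) + Num.sqrt t * Num.sqrt A)
     / (c - A)).
Proof.
move=> al2 K0 A0 Ac t0.
have D0 := @Dedist_ge0 d u v.
have cA : 0 < c - A by rewrite subr_gt0.
have al0 : 0 < al / 2 by rewrite divr_gt0 //; lra.
set k := Num.sqrt (xi * P).
set q := Num.sqrt (t * A + c - A).
set p := Num.sqrt t * Num.sqrt A.
have k0 : 0 < k by rewrite sqrtr_gt0.
have q0 : 0 <= q by rewrite sqrtr_ge0.
have p0 : 0 <= p by rewrite mulr_ge0 // sqrtr_ge0.
have [Dz|Dnz] := eqVneq (Defs.edist u v) 0.
  rewrite SNR_inf // Dz powR0 ?gt_eqF //.
  split => _; last first.
    rewrite mulry gtr0_sg // mul1e /= addey // addye; first exact: leey.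
    by apply: ge0_neqNy; apply: mule_ge0 => //; rewrite lee_fin mulr_ge0 // sqrtr_ge0.
  apply: divr_ge0; last exact: ltW.
  apply: mulr_ge0; [exact: ltW| exact: addr_ge0].
rewrite SNR_fin // -EFinM /= -!EFinD lee_fin.
have Dp : 0 < Defs.edist u v by rewrite lt_neqAle eq_sym Dnz D0.
set E := Defs.edist u v `^ (al / 2).
have E0 : 0 < E by rewrite powR_gt0.
have DE : Defs.edist u v `^ al = E ^+ 2.
  rewrite /E -powR_mulrn ?powR_ge0 // -powRrM; congr (_ `^ _).
  by rewrite divfK // pnatr_eq0.
have Kk : xi * P = k ^+ 2 by rewrite sqr_sqrtr // ltW.
set w := k / E.
have w0 : 0 < w by rewrite divr_gt0.
have B : xi * P / Defs.edist u v `^ al = w ^+ 2.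
  by rewrite DE Kk /w expr_div_n.
rewrite B (sqrtrM _ (ltW A0)) sqrtr_sqr (gtr0_norm w0).
have -> : A + w ^+ 2 + 2 * Num.sqrt t * (Num.sqrt A * w) = A + w ^+ 2 + 2 * p * w.
  by rewrite /p; ring.
rewrite (@core_f A c p q w p0 q0 w0 Ac); last first.
  have h1 : 0 <= t * A + c - A by rewrite -addrA addr_ge0 ?mulr_ge0 // ltW.
  rewrite /q /p (sqr_sqrtr h1) exprMn (sqr_sqrtr t0) (sqr_sqrtr (ltW A0)).
  ring.
rewrite ler_pdivlMr // /w.
rewrite -(ler_pM2r E0) mulrAC divfK ?gt_eqF //.
by split => h; rewrite mulrC.
Qed.



Lemma edist_neq0 (d : nat) (u v : 'rV[R]_d) : u != v -> Defs.edist u v != 0.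
Proof.
move=> uv; apply/eqP => h; move/eqP: uv; apply.
move: h; rewrite /Defs.edist => /eqP; rewrite sqrtr_eq0 => h.
have h0 : \sum_i (u ord0 i - v ord0 i) ^+ 2 = 0.
  by apply/eqP; rewrite eq_le h sum_sq_ge0.
apply/rowP => i; have := @sum_sq_eq0 d _ h0 i => /eqP; rewrite subr_eq0 => /eqP.
by [].
Qed.

Lemma g_qc (d : nat) (al xi P t1 t2 l : R) (s r1 r2 : 'rV[R]_d) :
  1 <= al -> 0 < xi * P -> 0 <= t1 <= 1 -> 0 <= t2 <= 1 -> 0 <= l <= 1 ->
  (Order.min ((1 - Num.sqrt t1 ^+ 2)%:E * SNR al xi P s r1)
             ((1 - Num.sqrt t2 ^+ 2)%:E * SNR al xi P s r2) <=
   (1 - Num.sqrt (l * t1 + (1 - l) * t2) ^+ 2)%:E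
     * SNR al xi P s (l *: r1 + (1 - l) *: r2))%E.
Proof.
move=> al1 K0 /andP[t10 t11] /andP[t20 t21] /andP[l0 l1].
have al0 : 0 < al by lra.
have t0 : 0 <= l * t1 + (1 - l) * t2 by rewrite addr_ge0 // mulr_ge0 // subr_ge0.
have t1' : l * t1 + (1 - l) * t2 <= 1 by nra.
rewrite !sqr_sqrtr //.
apply: qc_levels.
  apply: mule_ge0; last by apply: SNR_ge0; exact: ltW.
  by rewrite lee_fin subr_ge0.
move=> c c0.
move/(@g_level d al xi P c t1 s r1 al0 K0 c0); rewrite t10 t11 => /(_ isT) [lt1 h1].
move/(@g_level d al xi P c t2 s r2 al0 K0 c0); rewrite t20 t21 => /(_ isT) [lt2 h2].
apply/(@g_level d al xi P c _ s _ al0 K0 c0); first by rewrite t0 t1'.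
split.
  have [lz|lp] := eqVneq l 0; first by rewrite lz; lra.
  have lp' : 0 < l by rewrite lt_neqAle eq_sym lp l0.
  have : 0 < l * (1 - t1) by rewrite mulr_gt0 // subr_gt0.
  have : 0 <= (1 - l) * (1 - t2) by apply: mulr_ge0; rewrite subr_ge0 // ltW.
  lra.
have c0' : c != 0 by rewrite gt_eqF.
apply: (@lemG al _ (Defs.edist s r1) (Defs.edist s r2) _ _ _ l al1).
- by rewrite l0 l1.
- exact: Dedist_ge0.
- exact: Dedist_ge0.
- exact: Dedist_ge0.
- by apply: edist_conv_r; rewrite l0 l1.
- exact: h1.
- exact: h2.
- by rewrite le_eqVlt; apply/orP; left; apply/eqP; field.
Qed.


Lemma esqrt_ge0 (x : \bar R) : (0 <= esqrt x)%E.
Proof. by case: x => [r| |] //=; rewrite lee_fin sqrtr_ge0. Qed.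

Lemma fv_ge0 (d : nat) (al xi P A t : R) (r v : 'rV[R]_d) :
  0 < xi * P -> 0 < A -> 0 <= t ->
  (A%:E <= A%:E + SNR al xi P r v
           + (2 * Num.sqrt t)%:E * esqrt (A%:E * SNR al xi P r v))%E.
Proof.
move=> K0 A0 t0; rewrite -addeA; apply: leeDl; apply: adde_ge0.
  by apply: SNR_ge0; exact: ltW.
apply: mule_ge0; last exact: esqrt_ge0.
by rewrite lee_fin mulr_ge0 // sqrtr_ge0.
Qed.

Lemma f_qc (d : nat) (al xi P A t1 t2 l : R) (r1 r2 v : 'rV[R]_d) :
  2 <= al -> 0 < xi * P -> 0 < A ->
  0 <= t1 <= 1 -> 0 <= t2 <= 1 -> 0 <= l <= 1 ->
  (Order.min
    (A%:E + SNR al xi P r1 v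
           + (2 * Num.sqrt t1)%:E * esqrt (A%:E * SNR al xi P r1 v))
    (A%:E + SNR al xi P r2 v
           + (2 * Num.sqrt t2)%:E * esqrt (A%:E * SNR al xi P r2 v)) <=
   A%:E + SNR al xi P (l *: r1 + (1 - l) *: r2) v
     + (2 * Num.sqrt (l * t1 + (1 - l) * t2))%:E
       * esqrt (A%:E * SNR al xi P (l *: r1 + (1 - l) *: r2) v))%E.
Proof.
move=> al2 K0 A0 /andP[t10 t11] /andP[t20 t21] /andP[l0 l1].
have t0 : 0 <= l * t1 + (1 - l) * t2 by rewrite addr_ge0 // mulr_ge0 // subr_ge0.
apply: qc_levels.
  apply: (le_trans _ (@fv_ge0 d al xi P A _ _ v K0 A0 t0)); rewrite lee_fin; exact: ltW.
move=> c c0 h1 h2.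
have [cA|Ac] := lerP c A.
  apply: (le_trans _ (@fv_ge0 d al xi P A _ _ v K0 A0 t0)); by rewrite lee_fin.
move/(@f_level d al xi P A c t1 r1 v al2 K0 A0 Ac t10) : h1 => h1.
move/(@f_level d al xi P A c t2 r2 v al2 K0 A0 Ac t20) : h2 => h2.
apply/(@f_level d al xi P A c _ _ v al2 K0 A0 Ac t0).
have al21 : 1 <= al / 2 by rewrite ler_pdivlMr //; lra.
apply: (@lemG (al / 2) _ (Defs.edist r1 v) (Defs.edist r2 v) _ _ _ l al21).
- by rewrite l0 l1.
- exact: Dedist_ge0.
- exact: Dedist_ge0.
- exact: Dedist_ge0.
- by apply: edist_conv_l; rewrite l0 l1.
- exact: h1.
- exact: h2.
set t := l * t1 + (1 - l) * t2.
have hx1 : 0 <= t1 * A + c - A by rewrite -addrA addr_ge0 ?mulr_ge0 // ?subr_ge0 ltW.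
have hx2 : 0 <= t2 * A + c - A by rewrite -addrA addr_ge0 ?mulr_ge0 // ?subr_ge0 ltW.
have hq := @sqrt_conc _ _ l hx1 hx2.
have e1 : l * (t1 * A + c - A) + (1 - l) * (t2 * A + c - A) = t * A + c - A.
  by rewrite /t; ring.
rewrite e1 in hq.
have hp0 := @sqrt_conc _ _ l t10 t20.
have sA0 : 0 <= Num.sqrt A by rewrite sqrtr_ge0.
have hp : l * (Num.sqrt t1 * Num.sqrt A) + (1 - l) * (Num.sqrt t2 * Num.sqrt A)
          <= Num.sqrt t * Num.sqrt A.
  have -> : l * (Num.sqrt t1 * Num.sqrt A) + (1 - l) * (Num.sqrt t2 * Num.sqrt A)
     = (l * Num.sqrt t1 + (1 - l) * Num.sqrt t2) * Num.sqrt A by ring.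
  by rewrite ler_wpM2r // hp0 // l0 l1.
have hq' := hq ltac:(by rewrite l0 l1).
set k := Num.sqrt (xi * P).
have kc : 0 <= k / (c - A) by rewrite divr_ge0 // ?sqrtr_ge0 // subr_ge0 ltW.
set Q1 := Num.sqrt (t1 * A + c - A) in hq' *.
set Q2 := Num.sqrt (t2 * A + c - A) in hq' *.
set Q := Num.sqrt (t * A + c - A) in hq' *.
set P1 := Num.sqrt t1 * Num.sqrt A in hp *.
set P2 := Num.sqrt t2 * Num.sqrt A in hp *.
set P0 := Num.sqrt t * Num.sqrt A in hp *.
have -> : l * (k * (Q1 + P1) / (c - A)) + (1 - l) * (k * (Q2 + P2) / (c - A))
   = k / (c - A) * (l * Q1 + (1 - l) * Q2 + (l * P1 + (1 - l) * P2)) by ring.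
have -> : k * (Q + P0) / (c - A) = k / (c - A) * (Q + P0) by ring.
by apply: ler_wpM2l => //; apply: lerD.
Qed.


Lemma qc_step (B1 B2 f1 f2 f : \bar R) : (B1 <= Ccap f1)%E -> (B2 <= Ccap f2)%E ->
  (0 <= f1)%E -> (0 <= f2)%E -> (Order.min f1 f2 <= f)%E ->
  (Order.min B1 B2 <= Ccap f)%E.
Proof.
move=> h1 h2 p1 p2 hf.
apply: (le_trans (y := Order.min (Ccap f1) (Ccap f2))).
  by rewrite le_min !ge_min h1 h2 orbT.
rewrite -Ccap_min //; apply: Ccap_le => //.
by rewrite le_min p1 p2.
Qed.

End Aux.

Theorem theorem5 (R : realType) (d N : nat) (alpha Ps Pr xi_sr : R)
  (xi_sj xi_rj : 'I_N -> R) (s : 'rV[R]_d) (dst : 'I_N -> 'rV[R]_d) :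
  (1 <= d)%N -> (1 <= N)%N -> 2 <= alpha -> 0 < Ps -> 0 < Pr -> 0 < xi_sr ->
  (forall j, 0 < xi_sj j) -> (forall j, 0 < xi_rj j) ->
  (forall j, s != dst j) ->
  quasi_concave_on
    [set p : (R^o * 'rV[R]_d)%type | 0 <= p.1 <= 1]
    (fun p => RDF_rho alpha Ps Pr xi_sr xi_sj xi_rj s dst (Num.sqrt p.1) p.2)
  /\
  quasi_concave_on [set: 'rV[R]_d]
    (RDF alpha Ps Pr xi_sr xi_sj xi_rj s dst).
Proof.
move=> hd hN al2 Ps0 Pr0 xsr0 xsj0 xrj0 sd.
have partA : quasi_concave_on
    [set p : (R^o * 'rV[R]_d)%type | 0 <= p.1 <= 1]
    (fun p => RDF_rho alpha Ps Pr xi_sr xi_sj xi_rj s dst (Num.sqrt p.1) p.2).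
  move=> [t1 r1] [t2 r2] /= /andP[t10 t11] /andP[t20 t21] l /andP[l0 l1].
  have -> : l *: t1 + (1 - l) *: t2 = l * t1 + (1 - l) * t2 :> R by [].
  rewrite /RDF_rho; apply/bigmin_geP; split; first exact: leey.
  move=> j _.
  have hS := (@SNR_fin R d alpha (xi_sj j) Ps s (dst j) (@edist_neq0 R d s (dst j) (sd j))).
  rewrite hS.
  set A := xi_sj j * Ps / Defs.edist s (dst j) `^ alpha.
  have A0 : 0 < A.
    rewrite /A divr_gt0 ?mulr_gt0 // powR_gt0 //.
    rewrite lt_neqAle eq_sym (@edist_neq0 R d s (dst j) (sd j)) /=.
    exact: Dedist_ge0.
  have K0 : 0 < xi_rj j * Pr by rewrite mulr_gt0.
  have ht1 : 0 <= t1 <= 1 by rewrite t10 t11.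
  have ht2 : 0 <= t2 <= 1 by rewrite t20 t21.
  have hl : 0 <= l <= 1 by rewrite l0 l1.
  have t0 : 0 <= l * t1 + (1 - l) * t2 by rewrite addr_ge0 // mulr_ge0 // subr_ge0.
  rewrite le_min; apply/andP; split.
  - pose f (t : R) (r : 'rV[R]_d) :=
      (A%:E + SNR alpha (xi_rj j) Pr r (dst j)
       + (2 * Num.sqrt t)%:E * esqrt (A%:E * SNR alpha (xi_rj j) Pr r (dst j)))%E.
    apply: (@qc_step R _ _ (f t1 r1) (f t2 r2)).
    + by apply: (le_trans (bigmin_le _ j _)); rewrite hS -/A ge_min lexx.
    + by apply: (le_trans (bigmin_le _ j _)); rewrite hS -/A ge_min lexx.
    + apply: (le_trans _ (@fv_ge0 R d alpha (xi_rj j) Pr A t1 r1 (dst j) K0 A0 t10)).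
      by rewrite lee_fin ltW.
    + apply: (le_trans _ (@fv_ge0 R d alpha (xi_rj j) Pr A t2 r2 (dst j) K0 A0 t20)).
      by rewrite lee_fin ltW.
    + exact: (@f_qc R d alpha (xi_rj j) Pr A t1 t2 l r1 r2 (dst j) al2 K0 A0 ht1 ht2 hl).
  - pose g (t : R) (r : 'rV[R]_d) :=
      ((1 - Num.sqrt t ^+ 2)%:E * SNR alpha xi_sr Ps s r)%E.
    have Ks : 0 < xi_sr * Ps by rewrite mulr_gt0.
    have g0 : forall t r, 0 <= t <= 1 -> (0 <= g t r)%E.
      move=> t r /andP[ta tb]; apply: mule_ge0; last by apply: SNR_ge0; exact: ltW.
      by rewrite lee_fin sqr_sqrtr // subr_ge0.
    apply: (@qc_step R _ _ (g t1 r1) (g t2 r2)).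
    + by apply: (le_trans (bigmin_le _ j _)); rewrite ge_min lexx orbT.
    + by apply: (le_trans (bigmin_le _ j _)); rewrite ge_min lexx orbT.
    + exact: g0.
    + exact: g0.
    + by apply: (@g_qc R d alpha xi_sr Ps t1 t2 l s r1 r2 _ Ks ht1 ht2 hl); lra.
split => //.
move=> r1 r2 _ _ l /andP[l0 l1].
rewrite /RDF leNgt; apply/negP => hlt.
rewrite lt_min in hlt; case/andP: hlt => h1 h2.
have [_ [rho1 hr1 <-] hy1] := ereal_sup_gt h1.
have [_ [rho2 hr2 <-] hy2] := ereal_sup_gt h2.
move: hr1 hr2; rewrite /= !in_itv /= => /andP[p10 p11] /andP[p20 p21].
have hA := partA (rho1 ^+ 2, r1) (rho2 ^+ 2, r2).
move: hA; rewrite /= !sqrtr_sqr !ger0_norm //.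
have q1 : 0 <= rho1 ^+ 2 <= 1 by rewrite sqr_ge0 /=; nra.
have q2 : 0 <= rho2 ^+ 2 <= 1 by rewrite sqr_ge0 /=; nra.
move=> /(_ q1 q2 l) hA; have := hA ltac:(by rewrite l0 l1); clear hA => hA.
have ex : l *: rho1 ^+ 2 + (1 - l) *: rho2 ^+ 2 = l * rho1 ^+ 2 + (1 - l) * rho2 ^+ 2 :> R by [].
rewrite ex in hA.
set t := Num.sqrt (l * rho1 ^+ 2 + (1 - l) * rho2 ^+ 2) in hA.
have tin : 0 <= t <= 1.
  rewrite sqrtr_ge0 /= -sqrtr1 ler_sqrt //.
  case/andP: q1 => _ q1; case/andP: q2 => _ q2; nra.
set S := ereal_sup _ in hy1 hy2.
have ub : (RDF_rho alpha Ps Pr xi_sr xi_sj xi_rj s dst t (l *: r1 + (1 - l) *: r2) <= S)%E.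
  apply: ereal_sup_ubound; exists t => //=; by rewrite in_itv.
have : (S < Order.min (RDF_rho alpha Ps Pr xi_sr xi_sj xi_rj s dst rho1 r1)
                      (RDF_rho alpha Ps Pr xi_sr xi_sj xi_rj s dst rho2 r2))%E.
  by rewrite lt_min hy1 hy2.
move=> /lt_le_trans /(_ hA) /lt_le_trans /(_ ub).
by rewrite ltxx.
Qed.
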